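(* Let $\Gamma\in\mathcal S$ have $n>1$ vertices. Then no embedding $\varphi$ of $\Gamma$ into $\mathbb Z^n$ (as in the definition of $\mathcal S$) has an index of type (3); that is, there is no index $i$ such that exactly one vertex $v$ has nonzero coefficient at $E_i$ in $\varphi(v)$ and that coefficient equals $-2$.
   Context: A plumbing tree is a finite tree $\Gamma$ each of whose vertices $v$ carries an integer decoration $d(v)$. $\Gamma$ is minimal if no vertex has decoration $-1$. For $n\ge 1$ let $(\mathbb Z^n,Q_n)$ be the lattice with basis $E_1,\dots,E_n$ and $Q_n(E_i,E_j)=-\delta_{ij}$, and let $K=\sum_{i=1}^n E_i$. A plumbing tree $\Gamma$ on $n$ vertices is a symplectic plumbing tree if there is a map $\varphi$ (an embedding) from its vertex set to $\mathbb Z^n$ such that: for distinct vertices $v_1,v_2$, $Q_n(\varphi(v_1),\varphi(v_2))$ is $1$ if they are adjacent and $0$ otherwise; $Q_n(\varphi(v),\varphi(v))=d(v)$ for every $v$; and $Q_n(\varphi(v),K)+Q_n(\varphi(v),\varphi(v))=-2$ for every $v$. $\mathcal S$ is the set of minimal, connected symplectic plumbing trees. *)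

(* Defs.v *)
From mathcomp Require Import all_boot all_order all_algebra.
Set Implicit Arguments. Unset Strict Implicit. Unset Printing Implicit Defensive.
Import Order.TTheory GRing.Theory Num.Theory.
Local Open Scope ring_scope.

Definition Qn (n : nat) (x y : 'I_n -> int) : int := - \sum_(i < n) x i * y i.

Definition Kvec (n : nat) : 'I_n -> int := fun _ => 1.

Definition simple_graph (V : finType) (adj : rel V) : Prop :=
  symmetric adj /\ irreflexive adj.

Definition is_tree (V : finType) (adj : rel V) : Prop :=
  [/\ simple_graph adj,
      (0 < #|V|)%N,
      (forall x y : V, connect adj x y)
    & (forall s : seq V, uniq s -> (2 < size s)%N -> ~~ cycle adj s)].

Definition minimal_deco (V : finType) (d : V -> int) : Prop :=
  forall v, d v != -1.

Definition symplectic_embedding (V : finType) (adj : rel V) (d : V -> int)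
    (n : nat) (phi : V -> 'I_n -> int) : Prop :=
  [/\ (forall v1 v2, v1 != v2 ->
         Qn (phi v1) (phi v2) = if adj v1 v2 then 1 else 0),
      (forall v, Qn (phi v) (phi v) = d v)
    & (forall v, Qn (phi v) (@Kvec n) + Qn (phi v) (phi v) = -2)].

Definition type3_index (V : finType) (n : nat) (phi : V -> 'I_n -> int)
    (i : 'I_n) : Prop :=
  exists v : V, phi v i = -2 /\ (forall w : V, w != v -> phi w i = 0).

(* Main.v *)
Require Import Defs.
From mathcomp Require Import all_boot all_order all_algebra.
From mathcomp Require Import zify ring lra.
Import Order.TTheory GRing.Theory Num.Theory.
Local Open Scope ring_scope.

Lemma nsumr_eq0 (I : finType) (F : I -> rat) :
  (forall i, F i <= 0) -> \sum_i F i = 0 -> forall i, F i = 0.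
Proof.
move=> hF hs i.
have h := @psumr_eq0P _ _ predT (fun i => - F i).
have : - F i = 0.
  apply: h => //; first by move=> j _; rewrite oppr_ge0.
  by rewrite sumrN hs oppr0.
by move/eqP; rewrite oppr_eq0 => /eqP.
Qed.

Theorem theorem3p8 (V : finType) (adj : rel V) (d : V -> int) (n : nat)
    (phi : V -> 'I_n -> int) :
  #|V| = n -> (1 < n)%N ->
  is_tree adj -> minimal_deco d ->
  symplectic_embedding adj d phi ->
  ~ (exists i : 'I_n, type3_index phi i).
Proof.
move=> hcard hn [[hsym hirr] _ hconn _] hmin [hQ hD hK] [i [v [hvi hwi]]].
pose psi (x : V) (j : 'I_n) : int := if j == i then 0 else phi x j.
have hdot : forall x y, x != y ->
    \sum_j psi x j * psi y j = - (if adj x y then 1 else 0).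
  move=> x y hxy.
  have -> : \sum_j psi x j * psi y j = \sum_j phi x j * phi y j.
    apply: eq_bigr => j _; rewrite /psi; case: eqP => [->|_] //.
    rewrite mul0r; case: (eqVneq x v) => [exv|nxv].
      have nyv : y != v by rewrite -exv eq_sym.
      by rewrite (hwi y nyv) mulr0.
    by rewrite (hwi x nxv) mul0r.
  by rewrite -(hQ x y hxy) /Qn opprK.
have hsum : forall x, \sum_j phi x j = d x + 2.
  move=> x; have := hK x; rewrite hD /Qn /Kvec.
  under eq_bigr do rewrite mulr1.
  move=> h. rewrite -[2]opprK -h. ring.
have hd : forall x, d x <= -2.
  move=> x.
  have h1 : d x <= 0.
    rewrite -hD /Qn oppr_le0; apply: sumr_ge0 => j _; exact: mulr_ge0_le0 || nia.
  have h2 : d x != 0.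
    apply/eqP => h0.
    have : \sum_j phi x j * phi x j = 0 by rewrite -[LHS]opprK -/(Qn _ _) hD h0 oppr0.
    move/(@psumr_eq0P _ _ predT (fun j => phi x j * phi x j)).
    have hp : forall j, predT j -> 0 <= phi x j * phi x j by move=> j _; nia.
    move=> /(_ hp) hz.
    have := hsum x; rewrite h0 big1 // => j _.
    by have := hz j isT; move/eqP; rewrite mulf_eq0 orbb => /eqP.
  have h3 := hmin x.
  lia.
have hpsi : forall x, \sum_j psi x j = \sum_j phi x j - phi x i.
  move=> x; rewrite [in RHS](bigD1 i) //= [in LHS](bigD1 i) //= {1}/psi eqxx add0r.
  rewrite [phi x i + _]addrC addrK.
  by apply: eq_bigr => j hj; rewrite /psi (negbTE hj).
have [z hvz] : exists z, adj v z.
  have : (1 < #|V|)%N by rewrite hcard.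
  case/card_gt1P => x [y [_ _ hxy]].
  have [y' hy'] : exists y', v != y'.
    case: (eqVneq x v) => [exv|nxv]; first by exists y; rewrite -exv.
    by exists x; rewrite eq_sym.
  have := hconn v y'; case/connectP => p hp hl.
  case: p hp hl => [|z' p] /=; first by move=> _ hl; rewrite hl eqxx in hy'.
  by case/andP => h _ _; exists z'.
have hrsv : \sum_j psi v j < 0.
  have hvz' : v != z by apply/eqP => e; rewrite -e hirr in hvz.
  have := hdot v z hvz'; rewrite hvz => hs.
  have [j hj] : exists j, psi v j != 0.
    case: (pickP (fun j => psi v j != 0)) => [j hj|h]; first by exists j.
    move: hs; rewrite big1 // => j _; move: (h j) => /negbFE/eqP ->; by rewrite mul0r.
  have hji : j != i by apply: contraNneq hj => ->; rewrite /psi eqxx.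
  have hpj : psi v j = phi v j by rewrite /psi (negbTE hji).
  have hS : d v <= - 4 - phi v j * phi v j.
    rewrite -hD /Qn (bigD1 i) //= (bigD1 j) //= hvi.
    set s := \sum_(_ < n | _) _.
    have : 0 <= s by apply: sumr_ge0 => k _; nia.
    lia.
  rewrite hpsi hsum hvi; rewrite hpj in hj; nia.
have hrs : forall x, \sum_j psi x j <= 0.
  move=> x; case: (eqVneq x v) => [->|nxv]; first exact: ltW.
  rewrite hpsi hsum; have := hd x; rewrite hwi //; lia.
pose w (x : V) (j : 'I_n) : rat := (psi x j)%:~R.
pose A : 'M[rat]_(#|V|, n.-1) := \matrix_(k, j) w (enum_val k) (lift i j).
have hker : kermx A != 0.
  apply/eqP => h0.
  have := mxrank_ker A; rewrite h0 mxrank0.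
  have := rank_leq_col A; move: (\rank A) => r; rewrite hcard; lia.
case/rowV0Pn: hker => u /sub_kermxP huA hu0.
pose lam (x : V) : rat := u 0 (enum_rank x).
have hlam : forall j, \sum_x lam x * w x j = 0.
  move=> j; case: (unliftP i j) => [j' ->|->].
    transitivity ((u *m A) 0 j'); last by move/matrixP: huA => /(_ 0 j'); rewrite !mxE.
    rewrite mxE.
    transitivity (\sum_(x in predT) lam x * w x (lift i j')); first by apply: eq_bigl => x; rewrite inE.
    rewrite (big_enum_val (A:=predT)) /=.
    by apply: eq_bigr => k _; rewrite /lam enum_valK mxE.
  by apply: big1 => x _; rewrite /w /psi eqxx mulr0.
have [x0 hx0] : exists x, lam x != 0.
  case: (pickP (fun k => u 0 k != 0)) => [k hk|h].
    by exists (enum_val k); rewrite /lam enum_valK.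
  move/eqP: hu0; case; apply/rowP => k; rewrite !mxE.
  by move: (h k) => /negbFE/eqP.
pose G (x y : V) : rat := \sum_j w x j * w y j.
have hG : forall x y, x != y -> G x y = - (if adj x y then 1 else 0).
  move=> x y hxy; rewrite /G /w.
  have -> : \sum_j (psi x j)%:~R * (psi y j)%:~R = (\sum_j psi x j * psi y j)%:~R :> rat.
    by rewrite rmorph_sum; apply: eq_bigr => j _; rewrite rmorphM.
  by rewrite hdot //; case: (adj x y).
have hGle : forall x y, x != y -> G x y <= 0.
  by move=> x y hxy; rewrite hG //; case: (adj x y); lra.
have hq : forall c : V -> rat,
    \sum_j (\sum_x c x * w x j) ^+ 2 = \sum_x \sum_y c x * c y * G x y.
  move=> c.
  transitivity (\sum_j \sum_x \sum_y c x * c y * (w x j * w y j)).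
    apply: eq_bigr => j _; rewrite expr2 big_distrl /=.
    apply: eq_bigr => x _; rewrite big_distrr /=.
    by apply: eq_bigr => y _; ring.
  rewrite exchange_big /=; apply: eq_bigr => x _.
  rewrite exchange_big /=; apply: eq_bigr => y _.
  by rewrite /G mulr_sumr.
pose mu (x : V) : rat := `|lam x|.
have hq0 : \sum_x \sum_y lam x * lam y * G x y = 0.
  by rewrite -hq big1 // => j _; rewrite hlam expr0n.
have hqmu : \sum_j (\sum_x mu x * w x j) ^+ 2 = 0.
  apply/eqP; rewrite eq_le; apply/andP; split; last first.
    by apply: sumr_ge0 => j _; exact: sqr_ge0.
  apply: (@le_trans _ _ (\sum_x \sum_y lam x * lam y * G x y)); last by rewrite hq0.
  rewrite hq; apply: ler_sum => x _; apply: ler_sum => y _.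
  case: (eqVneq x y) => [->|hxy].
    rewrite /mu -normrM ger0_norm //; nra.
  have hg := hGle x y hxy.
  have hnn : lam x * lam y <= mu x * mu y by rewrite /mu -normrM ler_norm.
  nra.
have hLmu : forall j, \sum_x mu x * w x j = 0.
  move=> j.
  have := @psumr_eq0P _ _ predT (fun j => (\sum_x mu x * w x j) ^+ 2).
  move=> /(_ (fun j _ => sqr_ge0 _) hqmu j isT) /eqP.
  by rewrite expf_eq0 /= => /eqP.
have hmuge : forall x, 0 <= mu x by move=> x; exact: normr_ge0.
have hmuv : mu v = 0.
  have hs : \sum_x mu x * (\sum_j w x j) = 0.
    transitivity (\sum_j \sum_x mu x * w x j).
      rewrite exchange_big /=; apply: eq_bigr => x _; by rewrite mulr_sumr.
    by rewrite big1.
  have hle : forall x, mu x * (\sum_j w x j) <= 0.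
    move=> x; apply: mulr_ge0_le0 => //.
    by rewrite /w -rmorph_sum lerz0.
  have := @nsumr_eq0 _ _ hle hs v; move/eqP; rewrite mulf_eq0 => /orP [/eqP //|].
  by rewrite /w -rmorph_sum intr_eq0 => /eqP h; rewrite h in hrsv.
have hprop : forall x y, mu x = 0 -> adj x y -> mu y = 0.
  move=> x y hx hxy.
  have hs : \sum_y mu y * G x y = 0.
    transitivity (\sum_j w x j * \sum_y mu y * w y j).
      rewrite /G; under [RHS]eq_bigr do rewrite mulr_sumr.
      rewrite exchange_big /=; apply: eq_bigr => y' _; rewrite mulr_sumr.
      by apply: eq_bigr => j _; ring.
    by rewrite big1 // => j _; rewrite hLmu mulr0.
  have hle : forall y, mu y * G x y <= 0.
    move=> y'; case: (eqVneq x y') => [<-|hne]; first by rewrite hx mul0r.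
    exact: mulr_ge0_le0 (hmuge y') (hGle x y' hne).
  have hxy' : x != y by apply/eqP => e; rewrite -e hirr in hxy.
  have := @nsumr_eq0 _ _ hle hs y; rewrite hG // hxy.
  by move/eqP; rewrite mulrN1 oppr_eq0 => /eqP.
have hcl : closed adj [pred x | mu x == 0].
  move=> x y hxy; rewrite !inE.
  apply/idP/idP => /eqP h; apply/eqP.
    exact: hprop hxy.
  by apply: hprop h _; rewrite hsym.
have := closed_connect hcl (hconn v x0); rewrite !inE hmuv eqxx => /esym /eqP.
by move/normr0_eq0/eqP; rewrite (negbTE hx0).
Qed.
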